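(* Let $S$ be a numerical semigroup. For every $s\in S$ with $\mathfrak d(s)\ge2$ there exists $d\in\mathcal E(S)$ with $d\le_S s$.
   Context: A numerical semigroup $S$ is a submonoid of $(\mathbb N,+)$ with finite complement, with minimal generating set $A=\{n_1,\dots,n_e\}$. The cyclotomic exponent sequence is the unique integer sequence $(e_j)_{j\ge1}$ with $(1-x)\sum_{s\in S}x^s=\prod_{j\ge1}(1-x^j)^{e_j}$ in $\mathbb Z[[x]]$; $\mathcal E(S)=\{d\in\mathbb N: d\ge2,\ e_d\ne0,\ d\notin A\}$. Write $a\le_S b$ if $b-a\in S$. With $\varphi:\mathbb N^e\to S$, $\varphi(a)=\sum_ia_in_i$, $\mathfrak d(s)=|\varphi^{-1}(s)|$ is the number of factorizations of $s$. *)

(* Defs.v *)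
From HB Require Import structures.
From mathcomp Require Import all_boot all_order all_algebra.
Set Implicit Arguments. Unset Strict Implicit. Unset Printing Implicit Defensive.
Import Order.TTheory GRing.Theory Num.Theory.

Definition numerical_semigroup (S : pred nat) : Prop :=
  [/\ S 0, (forall a b, S a -> S b -> S (a + b)) &
      exists N, forall n, N <= n -> S n].

Definition phi (A : seq nat) (c : nat -> nat) : nat :=
  \sum_(i < size A) c i * nth 0 A i.

Definition generates (S : pred nat) (A : seq nat) : Prop :=
  forall s, S s <-> exists c : nat -> nat, phi A c = s.

Definition minimal_generating_set (S : pred nat) (A : seq nat) : Prop :=
  [/\ uniq A, generates S A &
      forall B : seq nat, {subset B <= A} -> generates S B -> {subset A <= B}].

(* Every factorization c of s (with all n_i >= 1) satisfies c_i <= s,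
   so it suffices to count coefficient vectors with entries in [0, s]. *)
Definition nfact (A : seq nat) (s : nat) : nat :=
  #|[set c : {ffun 'I_(size A) -> 'I_s.+1} |
      \sum_(i < size A) (c i : nat) * nth 0 A i == s]|.

Local Open Scope ring_scope.

Definition trunc (N : nat) (p : {poly int}) : {poly int} :=
  \poly_(i < N.+1) p`_i.

(* Truncation (mod x^(N+1)) of the power series 1/(1 - x^j), j >= 1. *)
Definition geom_trunc (j N : nat) : {poly int} :=
  \sum_(k < N.+1) 'X^(j * k).

(* A representative mod x^(N+1) of (1 - x^j)^e for e : int. *)
Definition cyc_factor (N j : nat) (e : int) : {poly int} :=
  if 0 <= e then (1 - 'X^j) ^+ `|e|%N else geom_trunc j N ^+ `|e|%N.

(* e is the cyclotomic exponent sequence of S: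
     (1 - x) * sum_{s in S} x^s = prod_{j >= 1} (1 - x^j)^(e_j)  in Z[[x]],
   expressed as equality of all truncations mod x^(N+1) (factors with
   j > N are congruent to 1 mod x^(N+1)). *)
Definition cyclotomic_exponents (S : pred nat) (e : nat -> int) : Prop :=
  forall N : nat,
    trunc N ((1 - 'X) * \sum_(s < N.+1 | S s) 'X^s) =
    trunc N (\prod_(1 <= j < N.+1) cyc_factor N j (e j)).

Definition in_E (A : seq nat) (e : nat -> int) (d : nat) : Prop :=
  (2 <= d)%N /\ e d != 0 /\ d \notin A.

Definition leS (S : pred nat) (a b : nat) : Prop := (a <= b)%N /\ S (b - a)%N.

(* Main.v *)
Require Import Defs.
From mathcomp Require Import all_boot all_order all_algebra.
From mathcomp Require Import zify.
Set Implicit Arguments. Unset Strict Implicit. Unset Printing Implicit Defensive.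
Import Order.TTheory GRing.Theory Num.Theory.

Section Aux.
Local Open Scope ring_scope.

Definition eqN (N : nat) (p q : {poly int}) := forall i, (i <= N)%N -> p`_i = q`_i.

Lemma eqN_mul N p p' q q' : eqN N p p' -> eqN N q q' -> eqN N (p * q) (p' * q').
Proof.
move=> Hp Hq i Hi; rewrite !coefM; apply: eq_bigr => k _.
have Hk : (k <= N)%N by apply: leq_trans Hi; rewrite -ltnS.
rewrite Hp // Hq //; apply: leq_trans Hi; exact: leq_subr.
Qed.

Lemma eqN_trunc N p q : trunc N p = trunc N q -> eqN N p q.
Proof.
move=> H i Hi; have := congr1 (fun r : {poly int} => r`_i) H.
by rewrite !coef_poly ltnS Hi.
Qed.

Definition msupp (j : nat) (p : {poly int}) := forall i, p`_i != 0 -> (j %| i)%N.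

Lemma msupp_add j p q : msupp j p -> msupp j q -> msupp j (p + q).
Proof.
move=> Hp Hq i; rewrite coefD; apply: contraR => Hd.
have /eqP -> : p`_i == 0 by apply: contraR Hd; exact: Hp.
have /eqP -> : q`_i == 0 by apply: contraR Hd; exact: Hq.
by rewrite addr0.
Qed.

Lemma msupp_opp j p : msupp j p -> msupp j (- p).
Proof. by move=> Hp i; rewrite coefN oppr_eq0; exact: Hp. Qed.

Lemma msupp0 j : msupp j 0.
Proof. by move=> i; rewrite coef0 eqxx. Qed.

Lemma msupp_Xn j n : (j %| n)%N -> msupp j 'X^n.
Proof.
move=> Hn i; rewrite coefXn; case: (i =P n) => [-> //|_]; by rewrite eqxx.
Qed.

Lemma msupp1 j : msupp j 1.
Proof. by rewrite -(expr0 'X); apply: msupp_Xn; rewrite dvdn0. Qed.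

Lemma msupp_mul j p q : msupp j p -> msupp j q -> msupp j (p * q).
Proof.
move=> Hp Hq i; rewrite coefM; apply: contraR => Hd.
rewrite big1 // => k _.
case: (eqVneq p`_k 0) => [->|Hk]; first by rewrite mul0r.
case: (eqVneq q`_(i - k) 0) => [->|Hk2]; first by rewrite mulr0.
exfalso; move/negP: Hd; apply.
have := dvdn_add (Hp _ Hk) (Hq _ Hk2).
by rewrite subnKC // -ltnS.
Qed.

Lemma msupp_exp j p n : msupp j p -> msupp j (p ^+ n).
Proof.
move=> Hp; elim: n => [|n IH]; first by rewrite expr0; exact: msupp1.
by rewrite exprS; apply: msupp_mul.
Qed.

Lemma msupp_sub j p q : msupp j p -> msupp j q -> msupp j (p - q).
Proof. by move=> Hp Hq; apply: msupp_add => //; apply: msupp_opp. Qed.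

Lemma msupp_geom j N : msupp j (geom_trunc j N).
Proof.
rewrite /geom_trunc; apply: big_ind.
- exact: msupp0.
- by move=> x y; apply: msupp_add.
- by move=> k _; apply: msupp_Xn; rewrite dvdn_mulr.
Qed.

Lemma msupp_cyc N j e : msupp j (cyc_factor N j e).
Proof.
rewrite /cyc_factor; case: ifP => _; apply: msupp_exp.
  by apply: msupp_sub; [exact: msupp1 | apply: msupp_Xn].
exact: msupp_geom.
Qed.

Lemma coef_geom j N i : (0 < j)%N -> (i <= N)%N ->
  (geom_trunc j N)`_i = (j %| i)%:R.
Proof.
move=> Hj Hi; rewrite /geom_trunc coef_sum.
under eq_bigr do rewrite coefXn.
case: (boolP (j %| i)%N) => Hd.
  have Hq : (i %/ j < N.+1)%N.
    by rewrite ltnS; apply: leq_trans Hi; exact: leq_div.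
  rewrite (bigD1 (Ordinal Hq)) //= mulnC divnK // eqxx big1 ?addr0 // => k Hk.
  case: eqP => // Hik; exfalso; move/negP: Hk; apply; apply/eqP/val_inj => /=.
  by rewrite Hik mulKn.
rewrite big1 // => k _; case: eqP => // Hik.
by move/negP: Hd; elim; rewrite Hik dvdn_mulr.
Qed.

Lemma coefM2 (p q : {poly int}) t : (0 < t)%N ->
  (forall k, (0 < k < t)%N -> p`_k * q`_(t - k) = 0) ->
  (p * q)`_t = p`_0 * q`_t + p`_t * q`_0.
Proof.
case: t => [//|t] _ H; rewrite coefM big_ord_recl big_ord_recr /= big1.
  by rewrite add0r subn0 subnn.
move=> i _; apply: H => /=; by rewrite /bump /= add1n ltnS ltn_ord.
Qed.

Definition low m (p : {poly int}) := p`_0 = 1 /\ forall k, (0 < k < m)%N -> p`_k = 0.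

Lemma low_mul m p q : low m p -> low m q -> low m (p * q).
Proof.
move=> [Hp0 Hp] [Hq0 Hq]; split; first by rewrite coef0M Hp0 Hq0 mulr1.
move=> k /andP [Hk0 Hkm]; rewrite coefM2 //.
  by rewrite Hp0 Hq ?Hp ?Hk0 // mul0r mulr0 addr0.
move=> k' /andP [H1 H2]; rewrite Hp ?mul0r // H1 /=; exact: ltn_trans Hkm.
Qed.

Lemma low_mulm m p q : (0 < m)%N -> low m p -> low m q ->
  (p * q)`_m = p`_m + q`_m.
Proof.
move=> Hm [Hp0 Hp] [Hq0 Hq]; rewrite coefM2 //.
  by rewrite Hp0 Hq0 mul1r mulr1 addrC.
by move=> k Hk; rewrite Hp ?mul0r.
Qed.

Lemma low1 m : low m 1.
Proof. by split => [|k /andP [Hk _]]; rewrite coef1 // eqn0Ngt Hk. Qed.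

Lemma low_prod m (I : Type) (r : seq I) (P : pred I) (F : I -> {poly int}) :
  (forall i, P i -> low m (F i)) ->
  low m (\prod_(i <- r | P i) F i) /\
  ((0 < m)%N -> (\prod_(i <- r | P i) F i)`_m = \sum_(i <- r | P i) (F i)`_m).
Proof.
move=> HF; elim: r => [|x r [IH1 IH2]].
  rewrite !big_nil; split; first exact: low1.
  by move=> Hm; rewrite coef1 eqn0Ngt Hm.
rewrite !big_cons; case: (boolP (P x)) => Px //.
split; first by apply: low_mul => //; apply: HF.
by move=> Hm; rewrite low_mulm // ?IH2 //; apply: HF.
Qed.

Definition ssupp (S : pred nat) (p : {poly int}) := forall i, p`_i != 0 -> S i.

Lemma ssupp_mul (S : pred nat) p q :
  (forall a b, S a -> S b -> S (a + b)%N) -> ssupp S p -> ssupp S q -> ssupp S (p * q).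
Proof.
move=> Hadd Hp Hq i; rewrite coefM; apply: contraR => Hd.
rewrite big1 // => k _.
case: (eqVneq p`_k 0) => [->|Hk]; first by rewrite mul0r.
case: (eqVneq q`_(i - k) 0) => [->|Hk2]; first by rewrite mulr0.
exfalso; move/negP: Hd; apply.
have := Hadd _ _ (Hp _ Hk) (Hq _ Hk2).
by rewrite subnKC // -ltnS.
Qed.

Lemma ssupp1 (S : pred nat) : S 0%N -> ssupp S 1.
Proof. by move=> H0 i; rewrite coef1; case: (i =P 0%N) => [->|] //; rewrite eqxx. Qed.

Lemma S_mul (S : pred nat) j k : S 0%N ->
  (forall a b, S a -> S b -> S (a + b)%N) -> S j -> S (j * k)%N.
Proof.
move=> H0 Hadd Hj; elim: k => [|k IH]; first by rewrite muln0.
by rewrite mulnS; apply: (Hadd).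
Qed.

Lemma ssupp_msupp (S : pred nat) j p : S 0%N ->
  (forall a b, S a -> S b -> S (a + b)%N) -> S j -> msupp j p -> ssupp S p.
Proof.
move=> H0 Hadd Hj Hp i /Hp /dvdnP [k ->]; rewrite mulnC; exact: S_mul.
Qed.

Definition good (S : pred nat) p := ssupp S p /\ p`_0 = 1.

Lemma good_mul (S : pred nat) t p q :
  (forall a b, S a -> S b -> S (a + b)%N) ->
  good S p -> good S q -> good S (p * q) /\
  ((0 < t)%N -> (forall k, (0 < k < t)%N -> ~~ (S k && S (t - k)%N)) ->
   (p * q)`_t = p`_t + q`_t).
Proof.
move=> Hadd [Hp Hp0] [Hq Hq0]; split.
  by split; [apply: ssupp_mul | rewrite coef0M Hp0 Hq0 mulr1].
move=> Ht Hat; rewrite coefM2 //; first by rewrite Hp0 Hq0 mul1r mulr1 addrC.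
move=> k Hk; case: (eqVneq p`_k 0) => [->|Hpk]; first by rewrite mul0r.
case: (eqVneq q`_(t - k) 0) => [->|Hqk]; first by rewrite mulr0.
by move: (Hat k Hk); rewrite (Hp _ Hpk) (Hq _ Hqk).
Qed.

Lemma good_prod (S : pred nat) t (I : Type) (r : seq I) (P : pred I) (F : I -> {poly int}) :
  S 0%N -> (forall a b, S a -> S b -> S (a + b)%N) ->
  (forall i, P i -> good S (F i)) ->
  good S (\prod_(i <- r | P i) F i) /\
  ((0 < t)%N -> (forall k, (0 < k < t)%N -> ~~ (S k && S (t - k)%N)) ->
  (\prod_(i <- r | P i) F i)`_t = \sum_(i <- r | P i) (F i)`_t).
Proof.
move=> H0 Hadd HF; elim: r => [|x r [IH1 IH2]].
  rewrite !big_nil; split; first by split; [apply: ssupp1 | rewrite coef1].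
  by move=> Ht _; rewrite coef1 eqn0Ngt Ht.
rewrite !big_cons; case: (boolP (P x)) => Px //.
have [G1 G2] := good_mul t Hadd (HF _ Px) IH1.
split => // Ht Hat; by rewrite G2 // IH2.
Qed.

Lemma low_msupp j p : msupp j p -> p`_0 = 1 -> low j p.
Proof.
move=> Hp H0; split => // k /andP [Hk Hkj]; apply/eqP; apply: contraT => /Hp.
by move/dvdn_leq => /(_ Hk); rewrite leqNgt Hkj.
Qed.

Lemma low_exp m p n : low m p -> low m (p ^+ n).
Proof.
move=> Hp; elim: n => [|n IH]; first by rewrite expr0; exact: low1.
by rewrite exprS; apply: low_mul.
Qed.

Lemma low_expm m p n : (0 < m)%N -> low m p -> (p ^+ n)`_m = n%:R * p`_m.
Proof.
move=> Hm Hp; elim: n => [|n IH]; first by rewrite expr0 coef1 eqn0Ngt Hm mul0r.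
rewrite exprS low_mulm //; last exact: low_exp.
by rewrite IH -addn1 natrD mulrDl mul1r addrC.
Qed.

Lemma low_1X j : (0 < j)%N -> low j (1 - 'X^j).
Proof.
move=> Hj; apply: low_msupp.
  by apply: msupp_sub; [exact: msupp1 | apply: msupp_Xn].
by rewrite coefB coef1 coefXn; case: j Hj => // j _; rewrite subr0.
Qed.

Lemma low_geom j N : (0 < j)%N -> low j (geom_trunc j N).
Proof. by move=> Hj; apply: low_msupp; [exact: msupp_geom | rewrite coef_geom ?dvdn0]. Qed.

Lemma low_cyc N j e : (0 < j)%N -> low j (cyc_factor N j e).
Proof.
move=> Hj; rewrite /cyc_factor; case: ifP => _; apply: low_exp.
  exact: low_1X.
exact: low_geom.
Qed.

Lemma coef_cyc N j e : (0 < j)%N -> (j <= N)%N -> (cyc_factor N j e)`_j = - e.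
Proof.
move=> Hj HjN; rewrite /cyc_factor; case: ifP => He.
  rewrite low_expm //; last exact: low_1X.
  rewrite coefB coef1 coefXn eqxx (negbTE (lt0n_neq0 Hj)) sub0r mulrN1.
  rewrite pmulrn gez0_abs //; congr (- _); exact: intz.
rewrite low_expm //; last exact: low_geom.
rewrite coef_geom // dvdnn mulr1 pmulrn ltz0_abs; last by rewrite ltNge He.
exact: intz.
Qed.

Lemma cyc0 N j : cyc_factor N j 0 = 1.
Proof. by rewrite /cyc_factor lexx expr0. Qed.

Lemma cycN1 N j : cyc_factor N j (-1) = geom_trunc j N.
Proof.
rewrite /cyc_factor; have -> : (0 <= (-1 : int)) = false by [].
by have -> : `|(-1 : int)|%N = 1%N by []; rewrite expr1.
Qed.

Lemma cyc1 N : cyc_factor N 1 1 = 1 - 'X.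
Proof.
rewrite /cyc_factor; have -> : (0 <= (1 : int)) = true by [].
by have -> : `|(1 : int)|%N = 1%N by []; rewrite !expr1.
Qed.

Lemma nfactE (A : seq nat) s :
  (nfact A s)%:R = (\prod_(i < size A) geom_trunc (nth 0%N A i) s)`_s :> int.
Proof.
rewrite /geom_trunc bigA_distr_bigA /= coef_sum.
under eq_bigr do rewrite prodrXr coefXn.
rewrite /nfact cardsE -sum1_card natr_sum big_mkcond /=.
apply: eq_bigr => f _; rewrite unfold_in.
have -> : (\sum_(i < size A) f i * nth 0 A i)%N = (\sum_(i<size A) nth 0 A i * f i)%N.
  by apply: eq_bigr => i _; rewrite mulnC.
by rewrite -[eqn _ _]/(_ == _) eq_sym; case: eqP.
Qed.

Lemma geom1 N : eqN N (geom_trunc 1 N * (1 - 'X)) 1.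
Proof.
move=> i Hi; rewrite mulrBr mulr1 coefB coefMX coef1 coef_geom ?dvd1n //.
case: i Hi => [|i] Hi /=; first by rewrite subr0.
by rewrite coef_geom ?dvd1n // ?subrr //; apply: ltnW.
Qed.

Lemma cancel1X N p q : eqN N ((1 - 'X) * p) ((1 - 'X) * q) -> eqN N p q.
Proof.
move=> H i Hi.
have E : forall r, eqN N (geom_trunc 1 N * ((1 - 'X) * r)) r.
  move=> r k Hk; rewrite mulrA.
  have Er : eqN N r r by [].
  by rewrite (eqN_mul (@geom1 N) Er Hk) mul1r.
have Eg : eqN N (geom_trunc 1 N) (geom_trunc 1 N) by [].
by rewrite -(E p i Hi) -(E q i Hi); apply: (eqN_mul Eg H).
Qed.

Lemma coef_Hs (S : pred nat) N i : (i <= N)%N ->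
  (\sum_(u < N.+1 | S u) 'X^u)`_i = (S i)%:R :> int.
Proof.
move=> Hi; rewrite coef_sum; under eq_bigr do rewrite coefXn.
have Hi' : (i < N.+1)%N by [].
case: (boolP (S i)) => Si.
  rewrite (bigD1 (Ordinal Hi')) //= eqxx big1 ?addr0 // => k /andP [_ Hk].
  case: eqP => // Hik; exfalso; move/negP: Hk; apply; apply/eqP/val_inj => /=.
  by rewrite Hik.
rewrite big1 // => k Sk; case: eqP => // Hik.
by move/negP: Si; elim; rewrite Hik.
Qed.

End Aux.
Section Aux2.
Local Open Scope ring_scope.
Definition agreeI (S : pred nat) N (p q : {poly int}) :=
  forall t, (t <= N)%N -> S (N - t)%N -> p`_t = q`_t.

Lemma ssupp0 (S : pred nat) p k : ssupp S p -> ~~ S k -> p`_k = 0.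
Proof. by move=> Hp Sk; apply/eqP; apply: contraR Sk; apply: Hp. Qed.

Lemma agreeI_mul (S : pred nat) N p p' q q' :
  (forall a b, S a -> S b -> S (a + b)%N) ->
  ssupp S p -> ssupp S p' -> ssupp S q -> ssupp S q' ->
  agreeI S N p p' -> agreeI S N q q' -> agreeI S N (p * q) (p' * q').
Proof.
move=> Hadd Hp Hp' Hq Hq' Ap Aq t Ht St; rewrite !coefM; apply: eq_bigr => k _.
have Hk : (k <= t)%N by rewrite -ltnS.
case: (boolP (S k)) => Sk; last by rewrite !(ssupp0 _ Sk) // !mul0r.
case: (boolP (S (t - k)%N)) => Stk; last by rewrite !(ssupp0 _ Stk) // !mulr0.
have E1 : (N - k = (N - t) + (t - k))%N by lia.
have E2 : (N - (t - k) = (N - t) + k)%N by lia.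
rewrite Ap; last (by rewrite E1; apply: (Hadd)); last by lia.
rewrite Aq //; last (by rewrite E2; apply: (Hadd)); by lia.
Qed.

Lemma ssupp_prod (S : pred nat) (I : Type) (r : seq I) (P : pred I) (F : I -> {poly int}) :
  S 0%N -> (forall a b, S a -> S b -> S (a + b)%N) ->
  (forall i, P i -> ssupp S (F i)) -> ssupp S (\prod_(i <- r | P i) F i).
Proof.
move=> H0 Hadd HF; apply: big_ind => //; first exact: ssupp1.
by move=> x y; apply: ssupp_mul.
Qed.

Lemma agreeI_prod (S : pred nat) N (I : Type) (r : seq I) (P : pred I)
  (F G : I -> {poly int}) :
  S 0%N -> (forall a b, S a -> S b -> S (a + b)%N) ->
  (forall i, P i -> [/\ ssupp S (F i), ssupp S (G i) & agreeI S N (F i) (G i)]) ->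
  agreeI S N (\prod_(i <- r | P i) F i) (\prod_(i <- r | P i) G i).
Proof.
move=> H0 Hadd HF; elim: r => [|x r IH]; first by rewrite !big_nil.
rewrite !big_cons; case: (boolP (P x)) => Px //.
have [A1 A2 A3] := HF x Px.
apply: agreeI_mul => //; apply: ssupp_prod => // i Pi; by case: (HF i Pi).
Qed.

Lemma agreeI_one (S : pred nat) N j p :
  S 0%N -> (forall a b, S a -> S b -> S (a + b)%N) -> S j ->
  msupp j p -> p`_0 = 1 -> ~~ S (N - j)%N -> agreeI S N p 1.
Proof.
move=> H0 Hadd Sj Hp Hp0 SNj t Ht St; rewrite coef1.
case: (eqVneq t 0%N) => [->|Ht0] //=.
apply/eqP; apply: contraR SNj => /Hp Hjt.
have Hjt' : (j <= t)%N by apply: dvdn_leq => //; rewrite lt0n.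
have E1 : (N - j = (N - t) + (t - j))%N by lia.
rewrite E1; apply: (Hadd) => //.
have /dvdnP [k ->] : (j %| t - j)%N by rewrite dvdn_sub.
by rewrite mulnC; apply: S_mul.
Qed.

End Aux2.

Section Semi.
Variable S : pred nat.
Hypothesis H0 : S 0.
Hypothesis Hadd : forall a b, S a -> S b -> S (a + b).

Definition Bgen (B : seq nat) x := exists c : nat -> nat, phi B c = x.

Lemma Bgen0 B : Bgen B 0.
Proof. by exists (fun _ => 0); rewrite /phi big1. Qed.

Lemma BgenD B x y : Bgen B x -> Bgen B y -> Bgen B (x + y).
Proof.
move=> [c1 <-] [c2 <-]; exists (fun i => c1 i + c2 i).
by rewrite /phi -big_split /=; apply: eq_bigr => i _; rewrite mulnDl.
Qed.

Lemma BgenM B k x : Bgen B x -> Bgen B (k * x).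
Proof.
elim: k => [|k IH] Hx; first by rewrite mul0n; apply: Bgen0.
by rewrite mulSn; apply: BgenD => //; apply: IH.
Qed.

Lemma Bgen_mem B x : x \in B -> Bgen B x.
Proof.
move=> Hx; exists (fun i => (i == index x B) : nat).
have Hi : index x B < size B by rewrite index_mem.
rewrite /phi (bigD1 (Ordinal Hi)) //= eqxx mul1n nth_index // big1 ?addn0 //.
move=> i Hne; case: eqP => // Heq; exfalso; move/negP: Hne; apply.
by apply/eqP/val_inj.
Qed.

Lemma phi_S B c : (forall b, b \in B -> S b) -> S (phi B c).
Proof.
move=> HB; rewrite /phi; apply: (big_ind S) => //.
move=> i _; rewrite mulnC; apply: S_mul => //; apply: HB; exact: mem_nth.
Qed.

Lemma phi_Bgen A B c : (forall a, a \in A -> Bgen B a) -> Bgen B (phi A c).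
Proof.
move=> HA; rewrite /phi; apply: (big_ind (Bgen B)) => //; first exact: Bgen0.
  by move=> x y; apply: BgenD.
by move=> i _; apply: BgenM; apply: HA; exact: mem_nth.
Qed.

Variable A : seq nat.
Hypothesis HA : minimal_generating_set S A.

Lemma A_S a : a \in A -> S a.
Proof.
case: HA => _ Hg _ Ha; apply/Hg; exact: Bgen_mem.
Qed.

Lemma not_gen a : a \in A -> Bgen [seq x <- A | x != a] a -> False.
Proof.
case: HA => Hu Hg Hmin Ha Hb.
set B := [seq x <- A | x != a] in Hb.
have HBA : {subset B <= A} by move=> x; rewrite mem_filter => /andP [].
have HgB : generates S B.
  move=> x; split.
    move/Hg => [c <-]; apply: phi_Bgen => a' Ha'.
    case: (eqVneq a' a) => [->|Hne] //; apply: Bgen_mem.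
    by rewrite mem_filter Hne.
  move=> [c <-]; apply: phi_S => b /HBA; exact: A_S.
have := Hmin B HBA HgB a Ha.
by rewrite mem_filter eqxx.
Qed.

Lemma A_pos a : a \in A -> 0 < a.
Proof.
move=> Ha; rewrite lt0n; apply/negP => /eqP Ha0; subst a.
apply: (not_gen Ha); exact: Bgen0.
Qed.

Lemma small_gen a y : a \in A -> S y -> y < a -> Bgen [seq x <- A | x != a] y.
Proof.
case: HA => Hu Hg Hmin Ha /Hg [c <-] Hlt.
rewrite /phi in Hlt *; apply: (big_ind (Bgen _)) => //; first exact: Bgen0.
  by move=> x1 y1; apply: BgenD.
move=> i _; case: (posnP (c i)) => [->|Hci]; first by rewrite mul0n; apply: Bgen0.
apply: BgenM; apply: Bgen_mem; rewrite mem_filter mem_nth // andbT.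
apply/negP => /eqP Heq; move: Hlt; rewrite (bigD1 i) //= Heq.
have : a <= c i * a by rewrite leq_pmull.
lia.
Qed.

Lemma atomA a u : a \in A -> 0 < u < a -> S u -> S (a - u) -> False.
Proof.
move=> Ha /andP [Hu0 Hua] Su Sau.
apply: (not_gen Ha).
have E : a = u + (a - u) by lia.
rewrite [in X in Bgen _ X]E.
apply: BgenD; apply: small_gen => //; lia.
Qed.

Lemma S1_A : S 1 -> perm_eq A [:: 1].
Proof.
move=> S1.
have Sall : forall n, S n by move=> n; rewrite -(muln1 n) mulnC; apply: S_mul.
have Hall : forall a, a \in A -> a = 1.
  move=> a Ha; have := A_pos Ha; case: (ltngtP a 1) => // Ha1 _.
  by exfalso; apply: (atomA (u := 1) Ha) => //; lia.
have Hne : A != [::].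
  apply/negP => /eqP HA0.
  case: HA => _ Hg _; move: (Sall 1) => /Hg [c].
  by rewrite HA0 /phi big_ord0.
have H1 : 1 \in A.
  by case: A Hne Hall => // x r _ Hall; rewrite -(Hall x) ?mem_head.
case: HA => Hu _ _; apply: uniq_perm => // x.
rewrite inE; apply/idP/eqP => [/Hall //|->//].
Qed.

End Semi.

Section Main.
Local Open Scope ring_scope.

Lemma low_le m m' p : (m <= m')%N -> low m' p -> low m p.
Proof. move=> Hm [H0 H]; split => // k /andP [Hk Hkm]; apply: H; rewrite Hk /=; exact: leq_trans Hkm Hm. Qed.

Lemma Dp_prod (A : seq nat) s :
  \prod_(i < size A) geom_trunc (nth 0%N A i) s = \prod_(a <- A) geom_trunc a s.
Proof. by rewrite (big_nth 0%N) big_mkord. Qed.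

Lemma main_count (S : pred nat) (A : seq nat) (e : nat -> int) s :
  numerical_semigroup S -> minimal_generating_set S A ->
  cyclotomic_exponents S e -> S s ->
  (forall d, (d <= s)%N -> (2 <= d)%N -> d \notin A -> S (s - d)%N -> e d = 0) ->
  (\prod_(a <- A) geom_trunc a s)`_s = 1.
Proof.
move=> [H0 Hadd _] HA Hcyc Ss H0'.
case: (boolP (S 1%N)) => S1.
  by rewrite (perm_big _ (S1_A H0 Hadd HA S1)) big_seq1 coef_geom ?dvd1n.
case: (posnP s) => [->|Hs].
  rewrite big_seq.
  have [[L0 _] _] := @low_prod 1%N _ A (fun a => a \in A) (fun a => geom_trunc a 0)
     (fun a Ha => low_le (A_pos H0 Hadd HA Ha) (low_geom _ (A_pos H0 Hadd HA Ha))).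
  exact: L0.
pose c := fun j => cyc_factor s j (e j).
have HQ : eqN s ((1 - 'X) * \sum_(u < s.+1 | S u) 'X^u) (\prod_(1 <= j < s.+1) c j).
  exact: eqN_trunc (Hcyc s).
have HsC : forall i, (i <= s)%N -> (\sum_(u < s.+1 | S u) 'X^u : {poly int})`_i = (S i)%:R.
  by move=> i Hi; rewrite coef_Hs.
have inI : forall j, j \in index_iota 1 s.+1 -> (0 < j)%N && (j <= s)%N.
  by move=> j; rewrite mem_index_iota ltnS.
have lowc : forall j, (0 < j)%N -> low j (c j) by move=> j Hj; apply: low_cyc.
have e1 : e 1%N = 1.
  have := HQ 1%N Hs.
  rewrite mulrBl mul1r coefB coefXM /= !HsC // (negbTE S1) H0.
  rewrite big_seq.
  have [_ ->] := @low_prod 1%N _ (index_iota 1 s.+1) (fun j => j \in index_iota 1 s.+1) c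
     (fun j Hj => low_le (proj1 (andP (inI j Hj))) (lowc j (proj1 (andP (inI j Hj))))) => //.
  rewrite -big_seq big_ltn // big_nat_cond big1; last first.
    move=> j /andP [/andP [Hj _] _]; have [_ ->] := lowc j (ltnW Hj) => //.
  by rewrite addr0 coef_cyc //= sub0r => /oppr_inj <-.
have goodc : forall j, (0 < j)%N -> S j -> good S (c j).
  move=> j Hj Sj; split; last by case: (lowc j Hj).
  apply: (ssupp_msupp H0 Hadd Sj); exact: msupp_cyc.
pose G m := \prod_(1 <= j < m | ~~ S j) c j.
have GS : forall m, (1 <= m)%N -> G m.+1 = G m * (if ~~ S m then c m else 1).
  by move=> m Hm; rewrite /G big_mkcond big_nat_recr //= -big_mkcond.
pose P := \prod_(1 <= j < s.+1 | S j) c j.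
have QPG : \prod_(1 <= j < s.+1) c j = P * G s.+1.
  by rewrite (bigID S) /=.
have goodP : good S P.
  rewrite /P big_seq_cond.
  have [G1 _] := @good_prod S 0%N _ (index_iota 1 s.+1)
     (fun j => (j \in index_iota 1 s.+1) && S j) c H0 Hadd
     (fun j Hj => goodc j (proj1 (andP (inI j (proj1 (andP Hj))))) (proj2 (andP Hj))).
  exact: G1.
have Gap : forall k, (k.+2 <= s.+1)%N -> G k.+2 = 1 - 'X.
  elim=> [|k IH] Hk.
    by rewrite GS // /G big_geq // mul1r S1 /= /c e1 cyc1.
  rewrite GS // IH; last by apply: ltnW.
  case: (boolP (S k.+2)) => Sk /=; first by rewrite mulr1.
  suff E : e k.+2 = 0 by rewrite /c E cyc0 mulr1.
  have Hm : (k.+2 <= s)%N by [].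
  pose R := \prod_(k.+2 <= j < s.+1 | ~~ S j) c j.
  have GR : G s.+1 = (1 - 'X) * R.
    rewrite -IH; last exact: ltnW.
    by rewrite /G /R -big_cat_nat // ltnW.
  have HR : eqN s (\sum_(u < s.+1 | S u) 'X^u) (P * R).
    by apply: cancel1X; rewrite mulrCA -GR -QPG.
  have lowR : low k.+2 R /\ ((0 < k.+2)%N -> R`_k.+2 = \sum_(k.+2 <= j < s.+1 | ~~ S j) (c j)`_k.+2).
    rewrite /R big_seq_cond [X in _ /\ (_ -> _ = X)]big_seq_cond.
    apply: low_prod => j /andP [Hj _]; move: Hj; rewrite mem_index_iota => /andP [Hj1 _].
    by apply: (low_le Hj1); apply: lowc; apply: leq_trans _ Hj1.
  case: lowR => [[R0 Rl] RC].
  have := HR k.+2 Hm; rewrite HsC // (negbTE Sk) coefM2 //; last first.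
    by move=> j /andP [Hj1 Hj2]; rewrite Rl ?mulr0 // subn_gt0 Hj2 /=; lia.
  rewrite R0 (ssupp0 (proj1 goodP) Sk) (proj2 goodP) mul0r addr0 mul1r RC //.
  rewrite big_ltn_cond // Sk big_nat_cond big1 ?addr0; last first.
    move=> j /andP [/andP [Hj1 _] _].
    have [_ L] := lowc j (ltn_trans (ltn0Sn _) Hj1).
    by apply: L; rewrite /= Hj1.
  by rewrite coef_cyc // => /esym /eqP; rewrite oppr_eq0 => /eqP.
have GE : G s.+1 = 1 - 'X by have := Gap s.-1; rewrite prednK //; apply.
have HP : eqN s (\sum_(u < s.+1 | S u) 'X^u) P.
  by apply: cancel1X => i Hi; rewrite HQ // QPG GE mulrC.
have Atom : forall a, a \in A -> (a <= s)%N -> e a = -1.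
  move=> a Ha Has.
  have Sa := A_S HA Ha; have a0 := A_pos H0 Hadd HA Ha.
  have atom : forall k, (0 < k < a)%N -> ~~ (S k && S (a - k)%N).
    move=> k Hk; apply/negP => /andP [Sk Sak]; exact: (atomA H0 Hadd HA Ha Hk Sk Sak).
  have := HP a Has; rewrite HsC // Sa /P big_seq_cond.
  have [_ ->] := @good_prod S a _ (index_iota 1 s.+1)
     (fun j => (j \in index_iota 1 s.+1) && S j) c H0 Hadd
     (fun j Hj => goodc j (proj1 (andP (inI j (proj1 (andP Hj))))) (proj2 (andP Hj))) => //.
  rewrite -big_seq_cond big_mkcond /= (bigD1_seq a) /=; last exact: iota_uniq.
    rewrite Sa coef_cyc // big1 ?addr0; last first.
      move=> j Hja; case: ifP => Sj //.
      apply/eqP; apply: contraT => Hne; have Hd := msupp_cyc Hne.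
      have j0 : (0 < j)%N by case: j Hja Sj Hne Hd => //; rewrite dvd0n => _ _ _ /eqP Ha0; move: a0; rewrite Ha0.
      have Hja' : (j < a)%N by rewrite ltn_neqAle Hja dvdn_leq.
      have : S (a - j)%N.
        have /dvdnP [k ->] : (j %| a - j)%N by rewrite dvdn_sub.
        by rewrite mulnC; apply: S_mul.
      by move=> Saj; move: (atom j); rewrite j0 Hja' Sj Saj => /(_ isT).
    by move=> H; rewrite -[e a]opprK -H.
  by rewrite mem_index_iota ltnS a0.
pose Gf := fun j => if j \in A then geom_trunc j s else 1.
have AgP : agreeI S s P (\prod_(1 <= j < s.+1 | S j) Gf j).
  rewrite /P big_seq_cond [X in agreeI _ _ _ X]big_seq_cond.
  apply: agreeI_prod => // j /andP [Hj Sj]; have /andP [Hj0 Hjs] := inI j Hj.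
  have sG : ssupp S (Gf j).
    rewrite /Gf; case: ifP => _; last exact: ssupp1.
    apply: (ssupp_msupp H0 Hadd Sj); exact: msupp_geom.
  have [sc c0] := goodc j Hj0 Sj.
  split => //.
  case: (boolP (S (s - j)%N)) => Ssj.
    rewrite /Gf /c; case: ifP => HjA.
      by rewrite Atom // cycN1.
    have j1 : j != 1%N by apply: contraNneq S1 => <-.
    by rewrite H0' ?cyc0 ?HjA //; lia.
  have A1 : agreeI S s (c j) 1.
    by apply: (agreeI_one H0 Hadd Sj) => //; exact: msupp_cyc.
  have A2 : agreeI S s (Gf j) 1.
    rewrite /Gf; case: ifP => _ //; apply: (agreeI_one H0 Hadd Sj) => //.
      exact: msupp_geom.
    by rewrite coef_geom ?dvdn0.
  by move=> t Ht St; rewrite A1 // A2.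
have P'E : \prod_(1 <= j < s.+1 | S j) Gf j = \prod_(j <- [seq j <- index_iota 1 s.+1 | j \in A]) geom_trunc j s.
  rewrite big_filter /Gf -big_mkcondr; apply: eq_bigl => j /=.
  by case: (boolP (j \in A)) => HjA; rewrite ?andbT ?andbF // (A_S HA HjA).
have Hperm : perm_eq [seq a <- A | (a <= s)%N] [seq j <- index_iota 1 s.+1 | j \in A].
  have [Hu _ _] := HA; apply: uniq_perm; [exact: filter_uniq | exact: filter_uniq (iota_uniq _ _)|].
  move=> x; rewrite !mem_filter mem_index_iota ltnS.
  case: (boolP (x \in A)) => HxA; rewrite ?andbF ?andbT //.
  by rewrite (A_pos H0 Hadd HA HxA).
have Erest : eqN s (\prod_(a <- A | ~~ (a <= s)%N) geom_trunc a s) 1.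
  apply: (big_ind (fun p => eqN s p 1)) => //.
    by move=> x y Ex Ey; rewrite -[1](mulr1 1); apply: eqN_mul.
  move=> a Has i Hi; rewrite coef1; case: (eqVneq i 0%N) => [->|Hi0].
    by rewrite coef_geom ?dvdn0 //; lia.
  apply/eqP; apply: contraT => /msupp_geom Hd.
  have : (0 < i)%N by rewrite lt0n.
  by move=> /dvdn_leq /(_ Hd); lia.
rewrite (bigID (fun a => (a <= s)%N)) /=.
rewrite (eqN_mul (fun i _ => erefl) Erest (leqnn s)) mulr1.
rewrite -big_filter (perm_big _ Hperm) -P'E.
by rewrite -(AgP s (leqnn s)) ?subnn // -HP // HsC // Ss.
Qed.

End Main.

Unset Implicit Arguments.

Theorem proposition5p2 (S : pred nat) (A : seq nat) (e : nat -> int) :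
  numerical_semigroup S ->
  minimal_generating_set S A ->
  cyclotomic_exponents S e ->
  forall s : nat, S s -> (2 <= nfact A s)%N ->
  exists d : nat, in_E A e d /\ leS S d s.
Proof.
move=> HS HA Hcyc s Ss H2.
case: (boolP [exists d : 'I_s.+1, [&& (2 <= d)%N, e d != 0%R, (d : nat) \notin A & S (s - d)%N]]).
  move=> /existsP [[d Hd] /= /and4P [H2d Hed HdA Ssd]].
  exists d; split; first by [].
  by split => //; rewrite -ltnS.
move=> Hno; exfalso.
have H0' : forall d, (d <= s)%N -> (2 <= d)%N -> d \notin A -> S (s - d)%N -> e d = 0%R.
  move=> d Hds H2d HdA Ssd; apply/eqP; apply: contraNT Hno => Hed.
  have Hd' : (d < s.+1)%N by [].
  by apply/existsP; exists (Ordinal Hd'); rewrite /= H2d Hed HdA Ssd.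
have := main_count HS HA Hcyc Ss H0'.
rewrite -Dp_prod -nfactE => /eqP; rewrite pnatr_eq1 => /eqP Hn.
by move: H2; rewrite Hn.
Qed.
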